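(* Let $P\subseteq\mathbb{R}^n$ be an $n$-dimensional rational polytope and let $\pi_P:\mathbb{R}^n\to\mathbb{R}^n/K(P)$ be its natural projection. Then $Q:=\pi_P(P)$ is a rational polytope (with respect to the lattice $\mathbb{Z}^n/(K(P)\cap\mathbb{Z}^n)$) satisfying $\mu(Q)\ge\mu(P)$. Moreover, if $\mu(Q)=\mu(P)$, then $\mathrm{core}(Q)$ is the point $\pi_P(\mathrm{core}(P))$.
   Context: For a full-dimensional rational polytope $R$ in a real vector space with lattice $\Lambda$, write $R$ irredundantly as $\{x:\langle a_i,x\rangle\ge b_i\}$ with $a_i$ primitive in the dual lattice $\Lambda^*$, $b_i\in\mathbb{Q}$, each inequality defining a facet; set $d_R(x):=\min_i(\langle a_i,x\rangle-b_i)$, $R^{(s)}:=\{x:d_R(x)\ge s\}$, $\mu(R):=(\sup\{s>0:R^{(s)}\neq\emptyset\})^{-1}$ ($\mathbb{Q}$-codegree), $\mathrm{core}(R):=R^{(1/\mu(R))}$. For $P$ (with lattice $\mathbb{Z}^n$), $K(P)$ is the linear subspace parallel to the affine hull of $\mathrm{core}(P)$, and the natural projection is the quotient map $\pi_P:\mathbb{R}^n\to\mathbb{R}^n/K(P)$; $Q$ is considered with respect to the lattice $\mathbb{Z}^n/(K(P)\cap\mathbb{Z}^n)$. *)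

(* Defs.v *)
From HB Require Import structures.
From mathcomp Require Import all_boot all_order all_algebra.
From mathcomp Require Import boolp classical_sets reals.
Set Implicit Arguments. Unset Strict Implicit. Unset Printing Implicit Defensive.
Import Order.TTheory GRing.Theory Num.Theory.
Local Open Scope ring_scope.
Local Open Scope classical_set_scope.

Definition dotv (R : realType) (k : nat) (a x : 'rV[R]_k) : R :=
  \sum_(j < k) a 0 j * x 0 j.

Definition integral_vec (R : realType) (k : nat) (a : 'rV[R]_k) : Prop :=
  forall j, a 0 j \is a Num.int.

Definition primitive_vec (R : realType) (k : nat) (a : 'rV[R]_k) : Prop :=
  integral_vec a /\
  forall d : nat, (1 < d)%N -> ~ (forall j, a 0 j / d%:R \is a Num.int).

Definition rational_num (R : realType) (b : R) : Prop := exists q : rat, b = ratr q.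

Definition ineq_set (R : realType) (k N : nat) (a : 'I_N -> 'rV[R]_k) (b : 'I_N -> R)
  : set 'rV[R]_k := [set x | forall i, b i <= dotv (a i) x].

Definition aff_dim_ge (R : realType) (k d : nat) (S : set 'rV[R]_k) : Prop :=
  exists (x0 : 'rV[R]_k) (v : 'M[R]_(d, k)),
    S x0 /\ (forall r, S (x0 + row r v)) /\ \rank v = d.

Definition rat_polytope_desc (R : realType) (k : nat) (P : set 'rV[R]_k)
  (N : nat) (a : 'I_N -> 'rV[R]_k) (b : 'I_N -> R) : Prop :=
  P = ineq_set a b /\ [/\
      (exists M : R, forall x, P x -> forall j, `|x 0 j| <= M),
      (exists (x : 'rV[R]_k) (e : R), 0 < e /\ forall y : 'rV[R]_k,
          (forall j, `|y 0 j - x 0 j| < e) -> P y),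
      (forall i, primitive_vec (a i) /\ rational_num (b i)),
      (forall i, [set x | forall i', i' != i -> b i' <= dotv (a i') x] <> P)
    &
      (forall i, aff_dim_ge k.-1 [set x | P x /\ dotv (a i) x = b i])].

Definition level_set (R : realType) (k N : nat) (a : 'I_N -> 'rV[R]_k) (b : 'I_N -> R)
  (s : R) : set 'rV[R]_k := [set x | forall i, s <= dotv (a i) x - b i].

Definition qcodeg (R : realType) (k N : nat) (a : 'I_N -> 'rV[R]_k) (b : 'I_N -> R) : R :=
  (sup [set s : R | 0 < s /\ level_set a b s !=set0])^-1.

Definition core (R : realType) (k N : nat) (a : 'I_N -> 'rV[R]_k) (b : 'I_N -> R)
  : set 'rV[R]_k := level_set a b (qcodeg a b)^-1.

Definition direction_space (R : realType) (k : nat) (S : set 'rV[R]_k) : set 'rV[R]_k :=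
  [set v | exists (M : nat) (c : 'I_M -> R) (y z : 'I_M -> 'rV[R]_k),
     (forall t, S (y t) /\ S (z t)) /\ v = \sum_(t < M) c t *: (y t - z t)].

(* Main.v *)
Require Import Defs.
From HB Require Import structures.
From mathcomp Require Import all_boot all_order all_algebra.
From mathcomp Require Import boolp classical_sets reals.
From mathcomp Require Import topology normedtype derive.
From mathcomp Require Import lra.
Import Order.TTheory GRing.Theory Num.Theory.
Import numFieldTopology.Exports numFieldNormedType.Exports.
Local Open Scope ring_scope.
Local Open Scope classical_set_scope.
Set Implicit Arguments. Unset Strict Implicit. Unset Printing Implicit Defensive.

Section Basic.
Variable R : realType.
Implicit Types (k : nat).

Lemma dotvE k (a x : 'rV[R]_k) : dotv a x = (a *m x^T) 0 0.
Proof. by rewrite /dotv !mxE; apply: eq_bigr => j _; rewrite !mxE. Qed.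

Lemma dotvC k (a x : 'rV[R]_k) : dotv a x = dotv x a.
Proof. by rewrite /dotv; apply: eq_bigr => j _; rewrite mulrC. Qed.

Lemma dotvDr k (a x y : 'rV[R]_k) : dotv a (x + y) = dotv a x + dotv a y.
Proof. by rewrite /dotv -big_split; apply: eq_bigr => j _; rewrite mxE mulrDr. Qed.

Lemma dotvZr k (a x : 'rV[R]_k) t : dotv a (t *: x) = t * dotv a x.
Proof. by rewrite /dotv mulr_sumr; apply: eq_bigr => j _; rewrite mxE mulrCA. Qed.

Lemma dotv0r k (a : 'rV[R]_k) : dotv a 0 = 0.
Proof. by rewrite /dotv big1 // => j _; rewrite mxE mulr0. Qed.

Lemma dotvNr k (a x : 'rV[R]_k) : dotv a (- x) = - dotv a x.
Proof. by rewrite -scaleN1r dotvZr mulN1r. Qed.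

Lemma dotvBr k (a x y : 'rV[R]_k) : dotv a (x - y) = dotv a x - dotv a y.
Proof. by rewrite dotvDr dotvNr. Qed.

Lemma dotvDl k (a c x : 'rV[R]_k) : dotv (a + c) x = dotv a x + dotv c x.
Proof. by rewrite dotvC dotvDr -!(dotvC x). Qed.

Lemma dotvZl k (a x : 'rV[R]_k) t : dotv (t *: a) x = t * dotv a x.
Proof. by rewrite dotvC dotvZr dotvC. Qed.

Lemma dotvNl k (a x : 'rV[R]_k) : dotv (- a) x = - dotv a x.
Proof. by rewrite dotvC dotvNr dotvC. Qed.

Lemma dotvBl k (a c x : 'rV[R]_k) : dotv (a - c) x = dotv a x - dotv c x.
Proof. by rewrite dotvDl dotvNl. Qed.

Lemma dotv0l k (x : 'rV[R]_k) : dotv 0 x = 0.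
Proof. by rewrite dotvC dotv0r. Qed.

Lemma dotv_sumr k (a : 'rV[R]_k) (I : Type) (s : seq I) (P : pred I) (F : I -> 'rV[R]_k) :
  dotv a (\sum_(i <- s | P i) F i) = \sum_(i <- s | P i) dotv a (F i).
Proof. exact: (big_morph (dotv a) (dotvDr a) (dotv0r a)). Qed.

Lemma dotv_mulmx k l (u : 'rV[R]_l) (x : 'rV[R]_k) (A : 'M[R]_(k, l)) :
  dotv u (x *m A) = dotv (u *m A^T) x.
Proof. by rewrite !dotvE trmx_mul mulmxA. Qed.

Lemma dotv_self_ge0 k (a : 'rV[R]_k) : 0 <= dotv a a.
Proof. by apply: sumr_ge0 => j _; rewrite -expr2 sqr_ge0. Qed.

Lemma dotv_self_eq0 k (a : 'rV[R]_k) : dotv a a = 0 -> a = 0.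
Proof.
move=> /eqP; rewrite psumr_eq0 => [/allP H|j _]; last by rewrite -expr2 sqr_ge0.
apply/matrixP => i j; rewrite ord1 mxE.
by have /(_ (mem_index_enum j)) := H j; rewrite /= mulf_eq0 orbb => /eqP.
Qed.

Lemma dotv_self_gt0 k (a : 'rV[R]_k) : a != 0 -> 0 < dotv a a.
Proof.
move=> an0; rewrite lt_neqAle dotv_self_ge0 andbT eq_sym.
by apply/eqP => /dotv_self_eq0 /eqP; rewrite (negbTE an0).
Qed.

Lemma mbigmin_le (I : finType) (F : I -> R) x0 j : \big[Num.min/x0]_i F i <= F j.
Proof. by rewrite (bigD1 j) //= ge_min lexx. Qed.

Lemma mbigmin_le0 (I : finType) (F : I -> R) x0 : \big[Num.min/x0]_i F i <= x0.
Proof. by elim/big_rec: _ => // i x _ H; rewrite ge_min H orbT. Qed.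

Lemma mlt_bigmin (I : finType) (F : I -> R) x0 s :
  s < x0 -> (forall i, s < F i) -> s < \big[Num.min/x0]_i F i.
Proof. by move=> h1 h2; elim/big_ind: _ => // x y hx hy; rewrite lt_min hx hy. Qed.

Lemma mle_bigmin (I : finType) (F : I -> R) x0 s :
  s <= x0 -> (forall i, s <= F i) -> s <= \big[Num.min/x0]_i F i.
Proof. by move=> h1 h2; elim/big_ind: _ => // x y hx hy; rewrite le_min hx hy. Qed.

Lemma small_step k (I J : finType) (c : I -> 'rV[R]_k) (d : I -> R) (p : pred I)
    (w : 'rV[R]_k) (h : J -> 'rV[R]_k) :
  (forall i, p i -> d i < dotv (c i) w) ->
  exists t, 0 < t /\ forall i j, p i -> d i < dotv (c i) (w + t *: h j).
Proof.
move=> H.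
pose g i := dotv (c i) w - d i.
pose e i j := dotv (c i) (h j).
pose term (ij : I * J) := if p ij.1 && (e ij.1 ij.2 < 0) then g ij.1 / (2 * - e ij.1 ij.2) else 1.
exists (\big[Num.min/1]_ij term ij); split.
  apply: mlt_bigmin => // -[i j]; rewrite /term /=.
  case: ifP => // /andP[pi ei]; apply: divr_gt0; first by rewrite subr_gt0 H.
  by rewrite mulr_gt0 // oppr_gt0.
move=> i j pi; set t := \big[_/_]_ij _.
have t0 : 0 < t.
  apply: mlt_bigmin => // -[i' j']; rewrite /term /=.
  case: ifP => // /andP[pi' ei]; apply: divr_gt0; first by rewrite subr_gt0 H.
  by rewrite mulr_gt0 // oppr_gt0.
have hg : 0 < g i by rewrite subr_gt0 H.
rewrite dotvDr dotvZr -subr_gt0 -/(e i j).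
have -> : dotv (c i) w + t * e i j - d i = g i + t * e i j by rewrite /g; lra.
have [eneg|epos] := ltP (e i j) 0; last by have := mulr_ge0 (ltW t0) epos; lra.
have : t <= term (i, j) by apply: mbigmin_le.
rewrite /term /= pi eneg /= ler_pdivlMr; last by rewrite mulr_gt0 // oppr_gt0.
nra.
Qed.

Definition ratv k (c : 'rV[R]_k) := forall j, rational_num (c 0 j).

Lemma rat_int (z : int) : rational_num (z%:~R : R).
Proof. by exists z%:~R; rewrite rmorph_int. Qed.
Lemma rat0 : rational_num (0 : R). Proof. exact: (rat_int 0). Qed.
Lemma rat1 : rational_num (1 : R). Proof. exact: (rat_int 1). Qed.
Lemma ratD (x y : R) : rational_num x -> rational_num y -> rational_num (x + y).
Proof. by move=> [p ->] [q ->]; exists (p + q); rewrite rmorphD. Qed.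
Lemma ratM (x y : R) : rational_num x -> rational_num y -> rational_num (x * y).
Proof. by move=> [p ->] [q ->]; exists (p * q); rewrite rmorphM. Qed.
Lemma ratN (x : R) : rational_num x -> rational_num (- x).
Proof. by move=> [p ->]; exists (- p); rewrite rmorphN. Qed.
Lemma ratV (x : R) : rational_num x -> rational_num (x^-1).
Proof. by move=> [p ->]; exists (p^-1); rewrite fmorphV. Qed.
Lemma ratB (x y : R) : rational_num x -> rational_num y -> rational_num (x - y).
Proof. by move=> hx hy; apply: ratD => //; apply: ratN. Qed.
Lemma ratDiv (x y : R) : rational_num x -> rational_num y -> rational_num (x / y).
Proof. by move=> hx hy; apply: ratM => //; apply: ratV. Qed.
Lemma rat_sum (I : Type) (s : seq I) (P : pred I) (F : I -> R) :
  (forall i, P i -> rational_num (F i)) -> rational_num (\sum_(i <- s | P i) F i).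
Proof. by move=> H; elim/big_ind: _ => //; [exact: rat0| exact: ratD]. Qed.
Lemma rat_isint (x : R) : x \is a Num.int -> rational_num x.
Proof. by move=> /intrP[z ->]; exact: rat_int. Qed.

Lemma ratv_dot k (a x : 'rV[R]_k) : ratv a -> ratv x -> rational_num (dotv a x).
Proof. by move=> ha hx; apply: rat_sum => j _; apply: ratM. Qed.
Lemma ratvD k (a x : 'rV[R]_k) : ratv a -> ratv x -> ratv (a + x).
Proof. by move=> ha hx j; rewrite mxE; apply: ratD. Qed.
Lemma ratvZ k (a : 'rV[R]_k) t : rational_num t -> ratv a -> ratv (t *: a).
Proof. by move=> ht ha j; rewrite mxE; apply: ratM. Qed.
Lemma ratv_mulmx k l (a : 'rV[R]_k) (B : 'M[R]_(k, l)) :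
  ratv a -> (forall i j, rational_num (B i j)) -> ratv (a *m B).
Proof. by move=> ha hB j; rewrite mxE; apply: rat_sum => i _; apply: ratM. Qed.

End Basic.

Section Attain.
Variable R : realType.

Lemma cont_dot k (a : 'rV[R]_k) : continuous (fun x : 'rV[R]_k => dotv a x).
Proof.
rewrite /dotv; elim: (index_enum _) => [|j s IH].
  by under eq_fun do rewrite big_nil; exact: cst_continuous.
under eq_fun do rewrite big_cons.
move=> x.
apply: (@continuousD _ _ _ (fun x : 'rV[R]_k => a 0 j * x 0 j) (fun x => \sum_(j0 <- s) a 0 j0 * x 0 j0)); last exact: IH.
apply: (@continuousM _ _ (fun=> a 0 j) (fun x : 'rV[R]_k => x 0 j)); first exact: cst_continuous.
exact: coord_continuous.
Qed.

Lemma closed_ineq k N (c : 'I_N -> 'rV[R]_k) (d : 'I_N -> R) : closed (ineq_set c d).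
Proof.
have -> : ineq_set c d = \bigcap_(i in setT) ((fun x => dotv (c i) x) @^-1` [set r | d i <= r]).
  rewrite /ineq_set; apply/seteqP; split => x /= H i; first by move=> _; exact: H.
  exact: (H i I).
apply: closed_bigI => i _.
have H := (proj1 (continuous_closedP _) (cont_dot (a:=c i))).
apply: H; exact: closed_ge.
Qed.

Lemma attain k N (c : 'I_N -> 'rV[R]_k) (d : 'I_N -> R) :
  (exists M, forall x, ineq_set c d x -> forall j, `|x 0 j| <= M) ->
  ineq_set c d !=set0 ->
  exists x0, ineq_set c d x0 /\ forall y s, ineq_set c d y ->
    (forall i, s <= dotv (c i) y - d i) -> forall i, s <= dotv (c i) x0 - d i.
Proof.
move=> [M hM] [z hz].
case: N c d hM z hz => [|N] c d hM z hz; first by exists z; split => // y s _ _ [].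
pose i0 : 'I_N.+1 := ord0.
pose F i x := dotv (c i) x - d i.
pose f x := \big[Num.min/F i0 x]_i F i x.
have cF i : continuous (F i).
  by move=> x; apply: continuousB; [exact: cont_dot| exact: cst_continuous].
have cf : continuous f.
  rewrite /f; elim: (index_enum _) => [|j s IH].
    by under eq_fun do rewrite big_nil; exact: cF.
  under eq_fun do rewrite big_cons.
  by move=> x; apply: continuous_min; [exact: cF| exact: IH].
have cpt : compact (ineq_set c d).
  apply: bounded_closed_compact; last exact: closed_ineq.
  exists `|M|; split; first by rewrite num_real.
  move=> M' hM' x /hM Hx /=.
  have -> : `|x| = mx_norm x by [].
  rewrite mx_normrE.
  elim/big_ind: _ => //.
  - by apply: ltW; apply: le_lt_trans hM'.
  - by move=> u v hu hv; rewrite ge_max hu hv.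
  - move=> [i j] _ /=; rewrite ord1; apply: le_trans (Hx j) _.
    by apply: ltW; apply: le_lt_trans hM'; exact: ler_norm.
have [x0 x0in x0max] := EVT_max_rV (ex_intro _ z hz) cpt (continuous_subspaceT cf).
exists x0; split; first by move: x0in; rewrite inE.
move=> y s Py Hs i.
have h1 : s <= f y.
  apply: mle_bigmin; first exact: (Hs i0).
  by move=> i1; exact: (Hs i1).
have h2 : f y <= f x0 by apply: x0max; rewrite inE.
by apply: le_trans (le_trans h1 h2) _; apply: mbigmin_le.
Qed.

End Attain.

Section FM.
Variable R : realType.
Variable k : nat.
Implicit Types (s : seq ('rV[R]_k * R)) (e z : 'rV[R]_k).

Definition ineq_seq s z : Prop := forall p, p \in s -> p.2 <= dotv p.1 z.

Definition fm_step e s :=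
  [seq p <- s | dotv p.1 e == 0] ++
  [seq ((- dotv q.1 e) *: p.1 + dotv p.1 e *: q.1, (- dotv q.1 e) * p.2 + dotv p.1 e * q.2)
    | p <- [seq p <- s | 0 < dotv p.1 e], q <- [seq q <- s | dotv q.1 e < 0]].

Lemma foldr_max_ge (l : seq R) x0 y : (y = x0 \/ y \in l) -> y <= foldr Num.max x0 l.
Proof.
elim: l => [|u l IH] /=; first by case=> [->|]; rewrite ?in_nil ?lexx.
case=> [e|]; first by rewrite le_max (IH (or_introl e)) orbT.
rewrite in_cons => /orP[/eqP ->|H]; first by rewrite le_max lexx.
by rewrite le_max (IH (or_intror H)) orbT.
Qed.

Lemma foldr_max_le (l : seq R) x0 b : x0 <= b -> (forall y, y \in l -> y <= b) ->
  foldr Num.max x0 l <= b.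
Proof.
elim: l => [|u l IH] //= h1 h2; rewrite ge_max h2 ?mem_head //= IH // => y hy.
by apply: h2; rewrite in_cons hy orbT.
Qed.

Lemma foldr_min_le (l : seq R) x0 y : (y = x0 \/ y \in l) -> foldr Num.min x0 l <= y.
Proof.
elim: l => [|u l IH] /=; first by case=> [->|]; rewrite ?in_nil ?lexx.
case=> [e|]; first by rewrite ge_min (IH (or_introl e)) orbT.
rewrite in_cons => /orP[/eqP ->|H]; first by rewrite ge_min lexx.
by rewrite ge_min (IH (or_intror H)) orbT.
Qed.

Lemma fm_stepP e s z : ineq_seq (fm_step e s) z <-> exists t, ineq_seq s (z + t *: e).
Proof.
split; last first.
  move=> [t H] r; rewrite mem_cat => /orP[|].
    rewrite mem_filter => /andP[/eqP pe ps].
    by have := H r ps; rewrite dotvDr dotvZr pe mulr0 addr0.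
  move=> /allpairsP[[p q] [/= pin qin ->]] /=.
  move: pin qin; rewrite !mem_filter => /andP[pe ps] /andP[qe qs].
  have := H p ps; have := H q qs; rewrite !dotvDr !dotvZr dotvDl !dotvZl.
  move: pe qe; set al := dotv p.1 e; set be := dotv q.1 e.
  set u := dotv p.1 z; set v := dotv q.1 z; move=> pe qe hq hp.
  nra.
move=> H.
pose pos := [seq p <- s | 0 < dotv p.1 e].
pose neg := [seq q <- s | dotv q.1 e < 0].
pose lo p := (p.2 - dotv p.1 z) / dotv p.1 e.
pose hi q := (q.2 - dotv q.1 z) / dotv q.1 e.
pose m0 := foldr Num.min 0 [seq hi q | q <- neg].
pose t := foldr Num.max m0 [seq lo p | p <- pos].
have lohi p q : p \in pos -> q \in neg -> lo p <= hi q.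
  move=> pin qin.
  have hc : ((- dotv q.1 e) * p.2 + dotv p.1 e * q.2) <=
            dotv ((- dotv q.1 e) *: p.1 + dotv p.1 e *: q.1) z.
    by apply: (H (_, _)); rewrite mem_cat; apply/orP; right; apply/allpairsP; exists (p, q).
  move: pin qin; rewrite !mem_filter => /andP[pe _] /andP[qe _].
  move: hc; rewrite dotvDl !dotvZl /lo /hi.
  set al := dotv p.1 e; set be := dotv q.1 e.
  set u := dotv p.1 z; set v := dotv q.1 z => hc.
  have al0 : al != 0 by rewrite gt_eqF.
  have be0 : be != 0 by rewrite lt_eqF.
  set U := (p.2 - u) / al; set V := (q.2 - v) / be.
  have hU : p.2 - u = U * al by rewrite /U divfK.
  have hV : q.2 - v = V * be by rewrite /V divfK.
  have hab : 0 < al * - be by rewrite mulr_gt0 // oppr_gt0.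
  nra.
exists t => p ps.
rewrite dotvDr dotvZr.
have [pe|pe|pe] := ltgtP (dotv p.1 e) 0.
- have pn : p \in neg by rewrite mem_filter pe.
  have : t <= hi p.
    apply: foldr_max_le.
      by apply: foldr_min_le; right; apply/mapP; exists p.
    by move=> y /mapP[p' p'in ->]; apply: lohi.
  by rewrite /hi ler_ndivlMr // => h; lra.
- have pn : p \in pos by rewrite mem_filter pe.
  have : lo p <= t by apply: foldr_max_ge; right; apply/mapP; exists p.
  by rewrite /lo ler_pdivrMr // => h; lra.
- have : p.2 <= dotv p.1 z.
    by apply: H; rewrite mem_cat mem_filter pe eqxx ps.
  by rewrite pe mulr0 addr0.
Qed.

Fixpoint spans (es : seq 'rV[R]_k) (w : 'rV[R]_k) : Prop :=
  match es with
  | [::] => w = 0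
  | e :: es' => exists t w', w = t *: e + w' /\ spans es' w'
  end.

Definition fm_all es s := foldr fm_step s es.

Lemma fm_allP es s z : ineq_seq (fm_all es s) z <-> exists w, spans es w /\ ineq_seq s (z + w).
Proof.
elim: es z => [|e es IH] z /=.
  by split => [H|[w [-> H]]]; [exists 0; rewrite addr0| rewrite addr0 in H].
rewrite fm_stepP; split.
  move=> [t /IH [w [hw H]]]; exists (t *: e + w); split; first by exists t, w.
  by rewrite addrA.
move=> [w [[t [w' [-> hw']]] H]]; exists t; apply/IH; exists w'; split => //.
by rewrite -addrA.
Qed.

Definition rat_sys s := forall p, p \in s -> ratv p.1 /\ rational_num p.2.

Lemma rat_fm_step e s : ratv e -> rat_sys s -> rat_sys (fm_step e s).
Proof.
move=> re rs p; rewrite mem_cat => /orP[|].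
  by rewrite mem_filter => /andP[_ /rs].
move=> /allpairsP[[p' q] [/= pin qin ->]] /=.
move: pin qin; rewrite !mem_filter => /andP[_ /rs [r1 r2]] /andP[_ /rs [r3 r4]].
have hp := ratv_dot r1 re; have hq := ratv_dot r3 re.
split.
  by apply: ratvD; apply: ratvZ => //; apply: ratN.
by apply: ratD; apply: ratM => //; apply: ratN.
Qed.

Lemma rat_fm_all es s : (forall e, e \in es -> ratv e) -> rat_sys s -> rat_sys (fm_all es s).
Proof.
elim: es => [|e es IH] //= he rs; apply: rat_fm_step; first by apply: he; rewrite mem_head.
by apply: IH => // e' h; apply: he; rewrite in_cons h orbT.
Qed.

End FM.

Section Prim.
Variable R : realType.

Lemma clear_den k (c : 'rV[R]_k) : ratv c ->
  exists D : R, 0 < D /\ rational_num D /\ integral_vec (D *: c).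
Proof.
move=> rc.
have [qf hq] := choice rc.
pose D : R := \prod_j ((denq (qf j))%:~R : R).
exists D; split; [|split].
- by apply: prodr_gt0 => j _; rewrite ltr0z denq_gt0.
- by apply: (big_ind (fun x : R => rational_num x)) => //;
    [exact: rat1 | exact: ratM | move=> j _; exact: rat_int].
- move=> j; rewrite mxE hq /D (bigD1 j) //= mulrC mulrA.
  have -> : ratr (qf j) * (denq (qf j))%:~R = (numq (qf j))%:~R :> R.
    by rewrite -[RHS](rmorph_int (@ratr R)) numqE rmorphM rmorph_int.
  apply: rpredM; first exact: intr_int.
  by apply: rpred_prod => i _; exact: intr_int.
Qed.

Lemma exists_nz_coord k (v : 'rV[R]_k) : v != 0 -> exists j, v 0 j != 0.
Proof.
move=> vn0; apply/not_existsP => H; move/eqP: vn0; apply.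
by apply/matrixP => i j; rewrite ord1 mxE; move: (H j) => /negP; rewrite negbK => /eqP.
Qed.

Lemma abs_le_sum k (v : 'rV[R]_k) j : `|v 0 j| <= \sum_i `|v 0 i|.
Proof. by rewrite (bigD1 j) //= lerDl sumr_ge0. Qed.

Lemma sum_abs_ge1 k (v : 'rV[R]_k) : integral_vec v -> v != 0 -> 1 <= \sum_i `|v 0 i|.
Proof.
move=> iv /exists_nz_coord [j hj].
by apply: le_trans (abs_le_sum v j); apply: norm_intr_ge1.
Qed.

Lemma prim_int k (v : 'rV[R]_k) : integral_vec v -> v != 0 ->
  exists l : R, 0 < l /\ rational_num l /\ primitive_vec (l *: v).
Proof.
suff H : forall n : nat, forall v : 'rV[R]_k, integral_vec v -> v != 0 ->
    \sum_i `|v 0 i| <= n%:R ->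
    exists l : R, 0 < l /\ rational_num l /\ primitive_vec (l *: v).
  move=> iv vn0; apply: (H (Num.Def.archi_bound (\sum_i `|v 0 i|))) => //.
  by apply: ltW; apply: archi_boundP; apply: sumr_ge0.
elim=> [|n IH] {}v iv vn0 hs.
  by have := sum_abs_ge1 iv vn0; lra.
case: (pselect (exists d, (1 < d)%N /\ forall j, v 0 j / d%:R \is a Num.int)) => [[d [hd hdiv]]|nex]; last first.
  exists 1; split; first exact: ltr01; split; first exact: rat1.
  rewrite scale1r; split => // d hd hall; apply: nex; exists d; split => //.
have d0 : (0 : R) < d%:R by rewrite ltr0n (ltn_trans _ hd).
have d2 : (2 : R) <= d%:R by rewrite ler_nat.
pose v' := (d%:R)^-1 *: v.
have iv' : integral_vec v' by move=> j; rewrite mxE mulrC hdiv.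
have v'n0 : v' != 0 by rewrite scaler_eq0 negb_or invr_eq0 vn0 gt_eqF.
have hS : \sum_i `|v 0 i| = d%:R * \sum_i `|v' 0 i|.
  rewrite mulr_sumr; apply: eq_bigr => i _; rewrite mxE normrM normfV.
  by rewrite (gtr0_norm d0) mulrA mulfV ?gt_eqF // mul1r.
have h1 := sum_abs_ge1 iv' v'n0.
have : \sum_i `|v' 0 i| <= n%:R.
  move: hs h1 d2; rewrite hS -natr1; set S := \sum_i _; set D := d%:R => hs h1 d2; nra.
move=> /(IH v' iv' v'n0) [l' [l'0 [rl' pl']]].
exists (l' / d%:R); split; first by apply: divr_gt0.
split; first by apply: ratDiv => //; exact: (@rat_int R d).
by rewrite -scalerA.
Qed.

Lemma prim_scale k (c : 'rV[R]_k) : ratv c -> c != 0 ->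
  exists l : R, 0 < l /\ rational_num l /\ primitive_vec (l *: c).
Proof.
move=> rc cn0; have [D [D0 [rD iD]]] := clear_den rc.
have : D *: c != 0 by rewrite scaler_eq0 negb_or gt_eqF.
move=> /(prim_int iD) [l [l0 [rl pl]]].
exists (l * D); split; first exact: mulr_gt0.
by split; [exact: ratM | rewrite -scalerA].
Qed.

End Prim.

Section Facet.
Variable R : realType.

Lemma interior_strict k N (c : 'I_N -> 'rV[R]_k) (d : 'I_N -> R) (x0 : 'rV[R]_k) (e : R) :
  0 < e -> (forall y : 'rV[R]_k, (forall j, `|y 0 j - x0 0 j| < e) -> ineq_set c d y) ->
  forall l, c l != 0 -> d l < dotv (c l) x0.
Proof.
move=> e0 hbox l cn0.
pose Mc := \sum_j `|c l 0 j| + 1.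
have Mc0 : 0 < Mc by rewrite /Mc ltr_wpDl // sumr_ge0.
pose t := e / (2 * Mc).
have t0 : 0 < t by rewrite /t divr_gt0 // mulr_gt0.
have : ineq_set c d (x0 - t *: c l).
  apply: hbox => j; rewrite !mxE addrAC subrr add0r normrN normrM (gtr0_norm t0).
  have hj := abs_le_sum (c l) j.
  have htM : t * Mc = e / 2.
    by rewrite /t invfM mulrA mulrAC mulfK ?gt_eqF // mulrC.
  have : t * `|c l 0 j| <= t * (Mc - 1) by rewrite ler_pM2l // /Mc addrK.
  lra.
move=> /(_ l); rewrite dotvBr dotvZr.
have := dotv_self_gt0 cn0; have := mulr_gt0 t0 (dotv_self_gt0 cn0); lra.
Qed.

Lemma facet_irred k N (c : 'I_N -> 'rV[R]_k) (d : 'I_N -> R) (x0 : 'rV[R]_k) (e : R) i :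
  0 < e -> (forall y : 'rV[R]_k, (forall j, `|y 0 j - x0 0 j| < e) -> ineq_set c d y) ->
  (forall l, c l != 0) ->
  [set x | forall i', i' != i -> d i' <= dotv (c i') x] <> ineq_set c d ->
  aff_dim_ge k.-1 [set x | ineq_set c d x /\ dotv (c i) x = d i].
Proof.
move=> e0 hbox cn0 hirr.
have hx0 := interior_strict e0 hbox.
have [z [hz1 hz2]] : exists z, (forall i', i' != i -> d i' <= dotv (c i') z) /\ dotv (c i) z < d i.
  case: (pselect (exists z, (forall i', i' != i -> d i' <= dotv (c i') z) /\ dotv (c i) z < d i)) => // nex.
  exfalso; apply: hirr; apply/seteqP; split => x hx /=; last by move=> i' _; exact: hx.
  move=> l; case: (eqVneq l i) => [->|hl]; last exact: hx.
  rewrite leNgt; apply/negP => hlt; apply: nex; exists x; split => //.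
pose fp := dotv (c i) x0 - d i.
pose fz := dotv (c i) z - d i.
have fp0 : 0 < fp by rewrite /fp subr_gt0 hx0.
have fz0 : fz < 0 by rewrite /fz subr_lt0.
pose tau := fp / (fp - fz).
have hden : 0 < fp - fz by lra.
have htau : tau * (fp - fz) = fp by rewrite /tau divfK ?gt_eqF.
have tau0 : 0 < tau by rewrite /tau divr_gt0.
have tau1 : tau < 1 by rewrite /tau ltr_pdivrMr // mul1r; lra.
pose w := x0 + tau *: (z - x0).
have hwi : dotv (c i) w = d i.
  rewrite /w dotvDr dotvZr dotvBr.
  move: htau; rewrite /fp /fz; nra.
have hwl l : l != i -> d l < dotv (c l) w.
  move=> hl; rewrite /w dotvDr dotvZr dotvBr.
  have := hx0 l (cn0 l); have := hz1 l hl; nra.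
have [k' hk] : exists k', k = k'.+1.
  case: k c x0 z hbox cn0 hirr hx0 hz1 hz2 fp fz fp0 fz0 tau hden htau tau0 tau1 w hwi hwl => [|k'] c x0 z hbox cn0 *; last by exists k'.
  by move: (cn0 i); rewrite thinmx0 eqxx.
subst k.
pose M := kermx (c i)^T.
have rkM : \rank M = k'.
  by rewrite mxrank_ker mxrank_tr rank_rV cn0 subn1.
pose V := row_base M.
have rkV : \rank V = \rank M by rewrite /V eq_row_base.
have perp r : dotv (c i) (row r V) = 0.
  have : (row r V <= M)%MS by rewrite -(eq_row_base M) row_sub.
  move/sub_kermxP => H; rewrite dotvC dotvE.
  by rewrite H mxE.
have [t [t0 ht]] := small_step (p:=fun l => l != i) (fun r => row r V) hwl.
have hw : ineq_set c d w /\ dotv (c i) w = d i.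
  split; last exact: hwi.
  move=> l; case: (eqVneq l i) => [->|hl]; first by rewrite hwi.
  exact: ltW (hwl l hl).
have key : forall r (W : 'M_(r, k'.+1)), r = k' ->
    (forall rr, ineq_set c d (w + row rr W) /\ dotv (c i) (w + row rr W) = d i) ->
    \rank W = r -> aff_dim_ge k'.+1.-1 [set x | ineq_set c d x /\ dotv (c i) x = d i].
  by move=> r W er hW hr; subst r; exists w, W; split; [|split].
apply: (key _ (t *: V) rkM).
- move=> r; have -> : row r (t *: V) = t *: row r V by apply/rowP => j; rewrite !mxE.
  split; last by rewrite dotvDr dotvZr perp mulr0 addr0.
  move=> l; case: (eqVneq l i) => [->|hl]; last exact: ltW (ht l r hl).
  by rewrite dotvDr dotvZr perp mulr0 addr0 hwi.
- have tn0 : t != 0 by rewrite gt_eqF.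
  by rewrite (eqmx_scale _ tn0) rkV.
Qed.

End Facet.

Section MakeDesc.
Variable R : realType.

Lemma primitive_nz k (v : 'rV[R]_k) : primitive_vec v -> v != 0.
Proof.
move=> [_ H]; apply/eqP => v0; apply: (H 2%N) => // j.
by rewrite v0 mxE mul0r rpred0.
Qed.

Lemma make_desc k L (c : 'I_L -> 'rV[R]_k) (d : 'I_L -> R) (S : set 'rV[R]_k) :
  S = ineq_set c d ->
  (forall l, ratv (c l) /\ rational_num (d l)) ->
  (exists M, forall x, S x -> forall j, `|x 0 j| <= M) ->
  (exists (x : 'rV[R]_k) (e : R), 0 < e /\ forall y : 'rV[R]_k,
          (forall j, `|y 0 j - x 0 j| < e) -> S y) ->
  exists NQ (aQ : 'I_NQ -> 'rV[R]_k) (bQ : 'I_NQ -> R), rat_polytope_desc S aQ bQ.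
Proof.
move=> hS hrat hbnd [x0 [e [e0 hbox]]].
pose desc (T : {set 'I_L}) := S = [set y | forall l, l \in T -> d l <= dotv (c l) y].
have ex : exists n, asbool (exists T : {set 'I_L}, #|T| = n /\ desc T).
  exists #|[set: 'I_L]%SET|; apply/asboolP; exists [set: 'I_L]%SET; split => //.
  by rewrite /desc hS; apply/seteqP; split => y hy /= l; [move=> _|]; apply: hy; rewrite ?in_setT.
case: (ex_minnP ex) => n /asboolP [T [hTn hT]] hmin.
have minT T' : desc T' -> (#|T| <= #|T'|)%N.
  by move=> hT'; rewrite hTn; apply: hmin; apply/asboolP; exists T'.
have x0S : S x0 by apply: hbox => j; rewrite subrr normr0.
have notdesc l : l \in T -> ~ desc (T :\ l).
  move=> lT /minT; rewrite (cardsD1 l T) lT /=.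
  by rewrite add1n ltnn.
have cn0 l : l \in T -> c l != 0.
  move=> lT; apply/negP => /eqP cl0; apply: (notdesc l lT).
  rewrite /desc hT; apply/seteqP; split => y hy /= l' hl'.
    by apply: hy; move: hl'; rewrite in_setD1 => /andP[].
  case: (eqVneq l' l) => [->|hne]; last by apply: hy; rewrite in_setD1 hne.
  rewrite cl0 dotv0l.
  have : S x0 by [].
  by rewrite hT => /(_ l lT); rewrite cl0 dotv0l.
have hl : forall l, exists lam : R, 0 < lam /\ rational_num lam /\ (c l != 0 -> primitive_vec (lam *: c l)).
  move=> l; case: (eqVneq (c l) 0) => [cl0|cl0].
    by exists 1; split; [exact: ltr01|split; [exact: rat1| move=> /negP]].
  have [lam [h1 [h2 h3]]] := prim_scale (proj1 (hrat l)) cl0.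
  by exists lam; split => //; split => // _.
have [lam hlam] := choice hl.
pose ev (i : 'I_#|T|) : 'I_L := enum_val i.
have evT i : ev i \in T by exact: enum_valP.
pose aQ i := lam (ev i) *: c (ev i).
pose bQ i := lam (ev i) * d (ev i).
have scl l y : (lam l * d l <= dotv (lam l *: c l) y) = (d l <= dotv (c l) y).
  by rewrite dotvZl ler_pM2l //; case: (hlam l).
have eqQ y : ineq_set aQ bQ y <-> (forall l, l \in T -> d l <= dotv (c l) y).
  split => [H l lT|H i]; last by rewrite /aQ /bQ scl; apply: H.
  have := H (enum_rank_in lT l); rewrite /aQ /bQ scl.
  by rewrite /ev (enum_rankK_in lT lT).
have SQ : S = ineq_set aQ bQ.
  by rewrite hT; apply/seteqP; split => y /= /eqQ.
have aQn0 i : aQ i != 0.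
  by rewrite /aQ scaler_eq0 negb_or gt_eqF ?cn0 //; case: (hlam (ev i)).
have irr i : [set x | forall i', i' != i -> bQ i' <= dotv (aQ i') x] <> S.
  move=> H; apply: (notdesc (ev i) (evT i)); rewrite /desc -H.
  apply/seteqP; split => y /= hy.
    move=> l; rewrite in_setD1 => /andP[lne lT].
    have := hy (enum_rank_in lT l); rewrite /aQ /bQ scl /ev (enum_rankK_in lT lT); apply.
    apply/eqP => he; move/eqP: lne; apply; rewrite -he /ev (enum_rankK_in lT lT) //.
  move=> i' hi'; rewrite /aQ /bQ scl; apply: hy; rewrite in_setD1 evT andbT.
  by apply/eqP => /enum_val_inj he; move/eqP: hi'.
exists #|T|, aQ, bQ; split => //; split => //.
- by exists x0, e.
- move=> i; split; first by case: (hlam (ev i)) => _ [_]; apply; apply: cn0.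
  by apply: ratM; [case: (hlam (ev i)) => _ []| case: (hrat (ev i))].
- move=> i; have hi := irr i; rewrite SQ in hi *.
  apply: (facet_irred (x0:=x0) (e:=e) e0 _ aQn0 hi).
  by move=> y /hbox; rewrite SQ.
Qed.

End MakeDesc.

Section Part1.
Variable R : realType.

Lemma seq_to_idx k (s : seq ('rV[R]_k * R)) :
  let c := fun l : 'I_(size s) => (nth (0, 0) s l).1 in
  let d := fun l : 'I_(size s) => (nth (0, 0) s l).2 in
  forall x, ineq_seq s x <-> ineq_set c d x.
Proof.
move=> c d x; split => [H l|H p ps]; first by apply: H; rewrite mem_nth.
have hi : (index p s < size s)%N by rewrite index_mem.
by have := H (Ordinal hi); rewrite /c /d /= nth_index.
Qed.

Lemma spans_ker k l (A : 'M[R]_(k, l)) (es : seq 'rV[R]_k) w :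
  (forall e, e \in es -> e *m A = 0) -> spans es w -> w *m A = 0.
Proof.
elim: es w => [|e es IH] w /= he; first by move->; rewrite mul0mx.
move=> [t [w' [-> hw']]]; rewrite mulmxDl -scalemxAl he ?mem_head // scaler0 add0r.
by apply: IH hw' => e' h; apply: he; rewrite in_cons h orbT.
Qed.

Lemma spans_sum k (I : Type) (s : seq I) (f : I -> 'rV[R]_k) (g : I -> R) :
  spans [seq f r | r <- s] (\sum_(r <- s) g r *: f r).
Proof.
elim: s => [|r s IH] /=; first by rewrite big_nil.
by rewrite big_cons; exists (g r), (\sum_(r0 <- s) g r0 *: f r0).
Qed.

Lemma intrK_floor (x : R) : x \is a Num.int -> (Num.floor x)%:~R = x.
Proof. by rewrite intrEfloor => /eqP. Qed.

Definition CB k l (B : 'M[R]_(k, l)) := \sum_j \sum_i `|B i j|.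

Lemma CB_ge0 k l (B : 'M[R]_(k, l)) : 0 <= CB B.
Proof. by apply: sumr_ge0 => j _; apply: sumr_ge0. Qed.

Lemma mul_bound k l (h : 'rV[R]_k) (B : 'M[R]_(k, l)) t : 0 <= t ->
  (forall i, `|h 0 i| <= t) -> forall j, `|(h *m B) 0 j| <= t * CB B.
Proof.
move=> t0 hh j; rewrite mxE.
apply: le_trans (ler_norm_sum _ _ _) _.
apply: (@le_trans _ _ (\sum_i t * `|B i j|)).
  by apply: ler_sum => i _; rewrite normrM ler_wpM2r.
rewrite -mulr_sumr ler_wpM2l // /CB (bigD1 j) //= lerDl.
by apply: sumr_ge0 => j' _; apply: sumr_ge0.
Qed.

Lemma part1 n (P : set 'rV[R]_n) N (a : 'I_N -> 'rV[R]_n) (b : 'I_N -> R) m (A : 'M[R]_(n, m)) :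
  rat_polytope_desc P a b ->
  (forall i j, A i j \is a Num.int) ->
  (forall z : 'rV[R]_m, integral_vec z ->
       exists y : 'rV[R]_n, integral_vec y /\ y *m A = z) ->
  exists (NQ : nat) (aQ : 'I_NQ -> 'rV[R]_m) (bQ : 'I_NQ -> R),
      rat_polytope_desc ((fun x => x *m A) @` P) aQ bQ.
Proof.
move=> [hP [[MP hMP] [x0 [e [e0 hbox]]] hpr _ _]] hint hsurj.
have hy k0 : exists y : 'rV[R]_n, integral_vec y /\ y *m A = delta_mx 0 k0.
  apply: hsurj => j; rewrite mxE; case: (_ && _); [exact: (@intr_int R 1)| exact: (@intr_int R 0)].
have [yk hyk] := choice hy.
pose B := \matrix_(k0, j) yk k0 0 j.
have BA : B *m A = 1%:M.
  apply/matrixP => k0 j; have := congr1 (fun M : 'rV[R]_m => M 0 j) (proj2 (hyk k0)).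
  rewrite !mxE /= eq_sym => <-; apply: eq_bigr => i _; rewrite !mxE.
  by [].
have Bint i j : B i j \is a Num.int by rewrite mxE; case: (hyk i) => h _; exact: h.
pose AQ := \matrix_(i, j) ((Num.floor (A i j))%:~R : rat).
have hAQ : A = map_mx ratr AQ.
  by apply/matrixP => i j; rewrite !mxE rmorph_int intrK_floor.
pose Kr := kermx A.
have hKr : Kr = map_mx ratr (kermx AQ) by rewrite /Kr hAQ map_kermx.
pose es := [seq row r Kr | r <- index_enum 'I_n].
have esrat v : v \in es -> ratv v.
  move=> /mapP[r _ ->] j; rewrite hKr; exists (kermx AQ r j); by rewrite !mxE.
have spansK w : spans es w <-> w *m A = 0.
  split.
    apply: spans_ker => v /mapP[r _ ->].
    by rewrite -row_mul mulmx_ker row0.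
  move=> /sub_kermxP /submxP [D ->]; rewrite mulmx_sum_row.
  exact: (spans_sum (index_enum _) (fun r => row r Kr) (fun r => D 0 r)).
pose s0 := [seq (a i, b i) | i <- index_enum 'I_N].
have hs0 x : ineq_seq s0 x <-> P x.
  rewrite hP; split => [H i|H p /mapP[i _ ->] /=]; last exact: H.
  by apply: (H (a i, b i)); apply/mapP; exists i => //; rewrite mem_index_enum.
pose s' := fm_all es s0.
pose sQ := [seq (p.1 *m B^T, p.2) | p <- s'].
have hQ y : ((fun x => x *m A) @` P) y <-> ineq_seq sQ y.
  have -> : ineq_seq sQ y <-> ineq_seq s' (y *m B).
    split => [H p ps|H p /mapP[q qs ->] /=].
      by rewrite dotv_mulmx; apply: (H (p.1 *m B^T, p.2)); apply/mapP; exists p.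
    by rewrite -dotv_mulmx; apply: H.
  rewrite fm_allP; split.
    move=> [x Px <-]; exists (x - x *m A *m B); split.
      by apply/spansK; rewrite mulmxBl -(mulmxA (x *m A) B A) BA mulmx1 subrr.
    by apply/hs0; rewrite addrC subrK.
  move=> [w [/spansK hw /hs0 Pw]]; exists (y *m B + w) => //.
  by rewrite mulmxDl hw addr0 -mulmxA BA mulmx1.
have ratsQ : rat_sys sQ.
  have : rat_sys s'.
    apply: rat_fm_all => // p /mapP[i _ ->] /=.
    by case: (hpr i) => [[ia _] rb]; split => // j; apply: rat_isint.
  move=> H p /mapP[q qs ->] /=; case: (H q qs) => h1 h2; split => //.
  by apply: ratv_mulmx => // i j; rewrite mxE; apply: rat_isint.
apply: (make_desc (c := fun l : 'I_(size sQ) => (nth (0, 0) sQ l).1)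
                  (d := fun l : 'I_(size sQ) => (nth (0, 0) sQ l).2)).
- apply/seteqP; split => y; first by move=> /hQ /seq_to_idx.
  by move=> /seq_to_idx /hQ.
- by move=> l; apply: ratsQ; rewrite mem_nth.
- exists (`|MP| * CB A) => y [x Px <-] j.
  apply: mul_bound => // i; apply: le_trans (hMP x Px i) _; exact: ler_norm.
- exists (x0 *m A), (e / (CB B + 1)).
  have CB0 := CB_ge0 B.
  split; first by rewrite divr_gt0 // ltr_wpDl.
  move=> y hyy; exists (x0 + (y - x0 *m A) *m B).
    have hadd (u v : 'rV[R]_n) i : (u + v) 0 i = u 0 i + v 0 i by rewrite mxE.
    apply: hbox => i; rewrite hadd addrAC subrr add0r.
    have hb := @mul_bound _ _ (y - x0 *m A) B (e / (CB B + 1)).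
    apply: le_lt_trans (hb _ _ i) _.
    + by apply: ltW; rewrite divr_gt0 // ltr_wpDl.
    + move=> k0; have -> : (y - x0 *m A) 0 k0 = y 0 k0 - (x0 *m A) 0 k0 by rewrite !mxE.
      by apply: ltW; apply: hyy.
    + rewrite mulrAC ltr_pdivrMr ?ltr_wpDl //.
      by rewrite ltr_pM2l //; rewrite ltrDl.
  by rewrite mulmxDl -mulmxA BA mulmx1 addrC subrK.
Qed.

End Part1.

Section Helpers.
Variable R : realType.

Lemma right_inv n m (A : 'M[R]_(n, m)) :
  (forall z : 'rV[R]_m, integral_vec z ->
       exists y : 'rV[R]_n, integral_vec y /\ y *m A = z) ->
  exists B : 'M[R]_(m, n), B *m A = 1%:M /\ forall i j, B i j \is a Num.int.
Proof.
move=> hsurj.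
have hy k0 : exists y : 'rV[R]_n, integral_vec y /\ y *m A = delta_mx 0 k0.
  apply: hsurj => j; rewrite mxE; case: (_ && _); [exact: (@intr_int R 1)| exact: (@intr_int R 0)].
have [yk hyk] := choice hy.
exists (\matrix_(k0, j) yk k0 0 j); split.
  apply/matrixP => k0 j; have := congr1 (fun M : 'rV[R]_m => M 0 j) (proj2 (hyk k0)).
  rewrite !mxE /= eq_sym => <-; apply: eq_bigr => i _; rewrite !mxE.
  by [].
by move=> i j; rewrite mxE; case: (hyk i) => h _; exact: h.
Qed.

Lemma qcodeg_N0 k (a : 'I_0 -> 'rV[R]_k) (b : 'I_0 -> R) : qcodeg a b = 0.
Proof.
rewrite /qcodeg sup_out ?invr0 // => -[_ [M hM]].
have hs : (0 < Num.max M 0 + 1) /\ level_set a b (Num.max M 0 + 1) !=set0.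
  split; first by rewrite ltr_wpDl // le_max lexx orbT.
  by exists 0 => -[].
have : M <= Num.max M 0 by rewrite le_max lexx.
have := hM _ hs; lra.
Qed.

Lemma dot_bound k (a y : 'rV[R]_k) M : (forall j, `|y 0 j| <= M) ->
  `|dotv a y| <= M * \sum_j `|a 0 j|.
Proof.
move=> hy; apply: le_trans (ler_norm_sum _ _ _) _; rewrite mulr_sumr.
apply: ler_sum => j _; rewrite normrM mulrC ler_wpM2r //.
Qed.

Lemma relint_point k N (c : 'I_N -> 'rV[R]_k) (d : 'I_N -> R) (x0 z : 'rV[R]_k) i :
  (forall l, d l < dotv (c l) x0) ->
  (forall l, l != i -> d l <= dotv (c l) z) -> dotv (c i) z < d i ->
  exists w, dotv (c i) w = d i /\ forall l, l != i -> d l < dotv (c l) w.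
Proof.
move=> hx0 hz1 hz2.
pose fp := dotv (c i) x0 - d i.
pose fz := dotv (c i) z - d i.
have fp0 : 0 < fp by rewrite /fp subr_gt0 hx0.
have fz0 : fz < 0 by rewrite /fz subr_lt0.
pose tau := fp / (fp - fz).
have hden : 0 < fp - fz by lra.
have htau : tau * (fp - fz) = fp by rewrite /tau divfK ?gt_eqF.
have tau0 : 0 < tau by rewrite /tau divr_gt0.
have tau1 : tau < 1 by rewrite /tau ltr_pdivrMr // mul1r; lra.
exists (x0 + tau *: (z - x0)); split.
  rewrite dotvDr dotvZr dotvBr.
  move: htau; rewrite /fp /fz; nra.
move=> l hl; rewrite dotvDr dotvZr dotvBr.
have := hx0 l; have := hz1 l hl; nra.
Qed.

Lemma prim_mult_le1 k (u : 'rV[R]_k) (lam : R) :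
  integral_vec u -> 0 < lam -> primitive_vec (lam *: u) -> lam <= 1.
Proof.
move=> iu l0 pu.
have un0 : u != 0 by apply: contraTneq (primitive_nz pu) => ->; rewrite scaler0 eqxx.
have [k0 hk0] := exists_nz_coord un0.
have [z hz] := intrP (iu k0).
have [w hw] := intrP (proj1 pu k0).
have z0 : z != 0 by apply: contraNneq hk0 => z0; rewrite hz z0.
pose r : rat := w%:~R / z%:~R.
have hl : lam = ratr r.
  rewrite /r fmorph_div !rmorph_int -hw -hz mxE mulfK //.
have r0 : 0 < r by rewrite -(ltr0q R) -hl.
rewrite leNgt; apply/negP => l1.
have hpq : (denq r < numq r)%R.
  have : 1 < r.
    have : (0 : R) < ratr (r - 1).
      have -> : ratr (r - 1) = lam - 1 :> R by rewrite hl rmorphB rmorph1.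
      by rewrite subr_gt0.
    by rewrite ltr0q subr_gt0.
  rewrite -[r in 1 < r]divq_num_den ltr_pdivlMr ?ltr0z ?denq_gt0 // mul1r.
  by rewrite ltr_int.
have p0 : (0 < numq r)%R by rewrite numq_gt0.
have hlq : lam * (denq r)%:~R = (numq r)%:~R.
  by rewrite hl -[r in ratr r]divq_num_den fmorph_div !rmorph_int divfK // intr_eq0 denq_neq0.
case: pu => iv /(_ `|numq r|%N); apply.
  rewrite -ltz_nat gtz0_abs //; apply: le_lt_trans hpq.
  by rewrite -gtz0_ge1 denq_gt0.
move=> j.
have [A hA] := intrP (iv j).
have [U hU] := intrP (iu j).
have hAU : A * denq r = numq r * U.
  apply: (@intr_inj R); rewrite !intrM -hA -hU mxE.
  by rewrite mulrAC hlq mulrC.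
have : (numq r %| A * denq r)%Z by rewrite hAU dvdz_mulr.
rewrite Gauss_dvdzl; last exact: coprime_num_den.
move=> /dvdzP [t ht].
rewrite hA ht intrM natr_absz gtr0_norm // mulfK; first exact: intr_int.
by rewrite intr_eq0 gt_eqF.
Qed.

End Helpers.

Section Part2.
Variable R : realType.

Lemma part2 n (P : set 'rV[R]_n) N (a : 'I_N -> 'rV[R]_n) (b : 'I_N -> R) m (A : 'M[R]_(n, m)) :
  rat_polytope_desc P a b ->
  (forall x : 'rV[R]_n, x *m A = 0 <-> direction_space (core a b) x) ->
  (forall i j, A i j \is a Num.int) ->
  (forall z : 'rV[R]_m, integral_vec z ->
       exists y : 'rV[R]_n, integral_vec y /\ y *m A = z) ->
  (0 < N)%N ->
  forall (NQ : nat) (aQ : 'I_NQ -> 'rV[R]_m) (bQ : 'I_NQ -> R),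
      rat_polytope_desc ((fun x => x *m A) @` P) aQ bQ ->
      qcodeg a b <= qcodeg aQ bQ /\
      (qcodeg aQ bQ = qcodeg a b ->
         exists c : 'rV[R]_m,
           core aQ bQ = [set c] /\ (fun x => x *m A) @` core a b = [set c]).
Proof.
move=> [hP [[MP hMP] [x0 [e [e0 hbox]]] hpr hirr _]] hK hint hsurj N0.
move=> NQ aQ bQ [hQ [[MQ hMQ] [y0 [eQ [eQ0 hboxQ]]] hprQ hirrQ _]].
set Q := (fun x => x *m A) @` P in hQ hMQ hboxQ hirrQ *.
have [B [BA Bint]] := right_inv hsurj.
pose i0 : 'I_N := Ordinal N0.
pose f i x := dotv (a i) x - b i.
have an0 i : a i != 0 by apply: primitive_nz; case: (hpr i).
have hbox' : forall y : 'rV[R]_n, (forall j, `|y 0 j - x0 0 j| < e) -> ineq_set a b y.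
  by move=> y /hbox; rewrite hP.
have hx0 i : b i < dotv (a i) x0 by apply: (interior_strict e0 hbox' (an0 i)).
have levP s y : 0 < s -> level_set a b s y -> P y.
  by move=> s0 hy; rewrite hP => i; have := hy i; lra.
pose SP := [set s : R | 0 < s /\ level_set a b s !=set0].
have SPub s : SP s -> s <= MP * \sum_j `|a i0 0 j| - b i0.
  move=> [s0 [y hy]]; have := hy i0; have := dot_bound (a i0) (hMP y (levP s y s0 hy)).
  move=> h1 h2; have := ler_norm (dotv (a i0) y); lra.
pose s0 := \big[Num.min/1]_i f i x0.
have s00 : 0 < s0 by apply: mlt_bigmin => // i; rewrite /f subr_gt0.
have SPs0 : SP s0 by split => //; exists x0 => i; apply: mbigmin_le.
have hsupP : has_sup SP by split; [exists s0 | exists (MP * \sum_j `|a i0 0 j| - b i0)].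
pose ss := sup SP.
have ssub s : SP s -> s <= ss by move=> hs; apply: sup_upper_bound.
have ss0 : 0 < ss by apply: lt_le_trans s00 (ssub _ SPs0).
have hq : qcodeg a b = ss^-1 by [].
have hcore : core a b = level_set a b ss by rewrite /core hq invrK.
have bndP : exists M, forall x, ineq_set a b x -> forall j, `|x 0 j| <= M.
  by exists MP => x; rewrite -hP; exact: hMP.
have neP : ineq_set a b !=set0 by exists x0 => i; exact: ltW (hx0 i).
have [c0 [Pc0 hc0]] := attain bndP neP.
have hc0s i : ss <= f i c0.
  apply: ge_sup; first by exists s0.
  move=> s [s0' [y hy]]; have Py : ineq_set a b y by rewrite -hP; exact: (levP s y s0' hy).
  exact: (hc0 y s Py hy i).
pose I i := `[< forall x, level_set a b ss x -> f i x = ss >].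
have IP i : I i -> forall x, level_set a b ss x -> f i x = ss by move=> /asboolP.
have nIP i : ~~ I i -> exists x, level_set a b ss x /\ ss < f i x.
  move=> /asboolP hn.
  case: (pselect (exists x, level_set a b ss x /\ ss < f i x)) => // nex.
  exfalso; apply: hn => x hx; apply/eqP; rewrite eq_le (hx i) andbT leNgt.
  by apply/negP => lt; apply: nex; exists x.
have hw j : exists x, level_set a b ss x /\ (~~ I j -> ss < f j x).
  case: (boolP (I j)) => hj; first by exists c0; split => // i; exact: hc0s.
  by have [x [hx1 hx2]] := nIP j hj; exists x.
have [w hwj] := choice hw.
pose c := (N%:R)^-1 *: \sum_j w j.
have N0R : (0:R) < N%:R by rewrite ltr0n.
have favg i : f i c = (N%:R)^-1 * \sum_j f i (w j).
  rewrite /f dotvZr dotv_sumr sumrB sumr_const card_ord mulrBr; congr (_ - _).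
  by rewrite -(mulr_natr (b i)) mulrCA mulVf ?mulr1 // gt_eqF.
have hsN : ss * N%:R = \sum_(j < N) ss by rewrite sumr_const card_ord mulr_natr.
have cl : level_set a b ss c.
  move=> i; change (ss <= f i c); rewrite favg mulrC ler_pdivlMr // hsN.
  by apply: ler_sum => j _; exact: (proj1 (hwj j) i).
have cnI j : ~~ I j -> ss < f j c.
  move=> hj; rewrite favg mulrC ltr_pdivlMr // hsN (bigD1 j) //= [X in _ < X](bigD1 j) //=.
  apply: ltr_leD; first exact: (proj2 (hwj j) hj).
  by apply: ler_sum => i _; exact: (proj1 (hwj i) j).
have cI i : I i -> f i c = ss by move=> hi; exact: IP i hi c cl.
have fadd i v t : f i (c + t *: v) = f i c + t * dotv (a i) v.
  by rewrite /f dotvDr [dotv _ (t *: v)]dotvZr; lra.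
have pert v : exists eps, 0 < eps /\ forall j, ~~ I j -> ss < f j (c + eps *: v).
  have hyp : forall j, ~~ I j -> b j + ss < dotv (a j) c.
    by move=> j /cnI; rewrite /f; lra.
  have [t [t0 ht]] := small_step (d := fun j => b j + ss) (p := fun j => ~~ I j) (fun _ : 'I_1 => v) hyp.
  by exists t; split => // j hj; have := ht j ord0 hj; rewrite /f; lra.
have pert_core v : (forall i, I i -> 0 <= dotv (a i) v) ->
    exists eps, 0 < eps /\ level_set a b ss (c + eps *: v).
  move=> hv; have [eps [eps0 heps]] := pert v; exists eps; split => // i.
  change (ss <= f i (c + eps *: v)).
  case: (boolP (I i)) => hi; last exact: ltW (heps i hi).
  by rewrite fadd cI // lerDl; apply: mulr_ge0; [exact: ltW | exact: hv].
have no_all_pos v : ~ (forall i, I i -> 0 < dotv (a i) v).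
  move=> hv; have [eps [eps0 heps]] := pert v.
  pose p := c + eps *: v.
  have hp i : ss < f i p.
    case: (boolP (I i)) => hi; last exact: heps i hi.
    by rewrite /p fadd cI // ltrDl mulr_gt0 // hv.
  pose s' := \big[Num.min/(ss + 1)]_i f i p.
  have hs' : ss < s' by apply: mlt_bigmin => //; rewrite ltrDl.
  have : SP s'.
    by split; [lra| exists p => i; apply: mbigmin_le].
  by move/ssub; lra.
have [iI hiI] : exists i, I i.
  case: (pselect (exists i, I i)) => // nex; exfalso.
  by apply: (no_all_pos 0) => i hi; exfalso; apply: nex; exists i.
have Iker i : I i -> forall v, direction_space (core a b) v -> dotv (a i) v = 0.
  move=> hi v [M [cc [y [z [hyz ->]]]]]; rewrite dotv_sumr big1 // => t _.
  rewrite dotvZr dotvBr.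
  have [hy hz] := hyz t; rewrite hcore in hy hz.
  have := IP i hi _ hy; have := IP i hi _ hz; rewrite /f => h1 h2.
  have -> : dotv (a i) (y t) - dotv (a i) (z t) = 0 by lra.
  by rewrite mulr0.
have kerI v : (forall i, I i -> dotv (a i) v = 0) -> v *m A = 0.
  move=> hv; have [eps [eps0 heps]] : exists eps, 0 < eps /\ level_set a b ss (c + eps *: v).
    by apply: pert_core => i hi; rewrite hv.
  apply/hK; exists 1%N, (fun=> eps^-1), (fun=> c + eps *: v), (fun=> c).
  split; first by move=> _; rewrite hcore.
  by rewrite big_ord1 addrAC subrr add0r scalerA mulVf ?scale1r // gt_eqF.
pose u i := a i *m B^T.
have hu i : I i -> forall x, dotv (a i) x = dotv (u i) (x *m A).
  move=> hi x; rewrite /u -dotv_mulmx.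
  have : (x - x *m A *m B) *m A = 0 by rewrite mulmxBl -(mulmxA (x *m A) B A) BA mulmx1 subrr.
  by move/hK/(Iker i hi); rewrite dotvBr => /eqP; rewrite subr_eq0 => /eqP.
have uint i : integral_vec (u i).
  move=> j; rewrite mxE; apply: rpred_sum => l _; rewrite mxE; apply: rpredM.
    by case: (hpr i) => -[h _] _; exact: h.
  exact: Bint.
have QP x : P x -> Q (x *m A) by move=> Px; exists x.
have facetQ i : I i -> exists j lam, 0 < lam /\ lam <= 1 /\
    forall y, dotv (aQ j) y - bQ j = lam * (dotv (u i) y - b i).
  move=> hi.
  have [z [hz1 hz2]] : exists z, (forall l, l != i -> b l <= dotv (a l) z) /\ dotv (a i) z < b i.
    case: (pselect (exists z, (forall l, l != i -> b l <= dotv (a l) z) /\ dotv (a i) z < b i)) => // nex.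
    exfalso; apply: (hirr i); rewrite hP; apply/seteqP; split => x hx /=; last by move=> l _; exact: hx.
    move=> l; case: (eqVneq l i) => [->|hl]; last exact: hx.
    rewrite leNgt; apply/negP => hlt; apply: nex; exists x; split => //.
  have [w' [hw'i hw'l]] := relint_point hx0 hz1 hz2.
  pose wq := w' *m A.
  have Pw' : P w'.
    rewrite hP => l; case: (eqVneq l i) => [->|hl]; [by rewrite hw'i | exact: ltW (hw'l l hl)].
  have uw : dotv (u i) wq = b i by rewrite -hu.
  pose ul l := a l *m B^T.
  pose C := \sum_l \sum_k `|ul l 0 k| + 1.
  pose delta := \big[Num.min/1]_l (if l == i then 1 else f l w').
  have delta0 : 0 < delta.
    apply: mlt_bigmin => // l; case: (eqVneq l i) => [_|hl] //; rewrite /f subr_gt0; exact: hw'l.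
  have C0 : 0 < C by rewrite /C ltr_wpDl // sumr_ge0 // => l _; rewrite sumr_ge0.
  pose eta := delta / (2 * C).
  have eta0 : 0 < eta by rewrite divr_gt0 // mulr_gt0.
  have etaC : eta * C = delta / 2 by rewrite /eta invfM mulrA mulrAC mulfK ?gt_eqF // mulrC.
  have nbhd h : dotv (u i) h = 0 -> (forall k, `|h 0 k| <= eta) -> Q (wq + h).
    move=> hh hk; exists (w' + h *m B); last by rewrite mulmxDl -mulmxA BA mulmx1.
    rewrite hP => l; rewrite dotvDr dotv_mulmx.
    case: (eqVneq l i) => [->|hl]; first by rewrite hw'i -/(u i) hh addr0.
    have hb := dot_bound (ul l) hk.
    have hs : \sum_k `|ul l 0 k| <= C - 1.
      by rewrite /C addrK (bigD1 l) //= lerDl sumr_ge0 // => l' _; rewrite sumr_ge0.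
    have hd : delta <= f l w'.
      by have := @mbigmin_le _ _ (fun l => if l == i then 1 else f l w') 1 l; rewrite (negbTE hl).
    have h3 : eta * \sum_k `|ul l 0 k| <= eta * C - eta.
      have -> : eta * C - eta = eta * (C - 1) by rewrite mulrBr mulr1.
      by rewrite ler_pM2l.
    have h4 : - dotv (ul l) h <= `|dotv (ul l) h| by rewrite -normrN ler_norm.
    move: hd; rewrite /f => hd.
    change (b l <= dotv (a l) w' + dotv (ul l) h).
    lra.
  have un0 : u i != 0.
    apply/eqP => u0; have := hu i hi (a i); rewrite u0 dotv0l => /dotv_self_eq0 /eqP.
    by rewrite (negbTE (an0 i)).
  have uu0 : 0 < dotv (u i) (u i) by apply: dotv_self_gt0.
  have [j hj] : exists j, dotv (aQ j) wq = bQ j.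
    case: (pselect (exists j, dotv (aQ j) wq = bQ j)) => // nex; exfalso.
    have hQw : ineq_set aQ bQ wq by rewrite -hQ; exists w'.
    have strict j : bQ j < dotv (aQ j) wq.
      rewrite lt_neqAle hQw andbT; apply/eqP => e'; apply: nex; exists j; by rewrite e'.
    have [t [t0 ht]] := small_step (p := fun _ => true) (fun _ : 'I_1 => - u i) (fun j (_ : true) => strict j).
    have : Q (wq + t *: - u i) by rewrite hQ => j; exact: ltW (ht j ord0 isT).
    move=> [x Px hx]; have := hu i hi x; rewrite hx dotvDr dotvZr dotvNr uw.
    rewrite mulrN; have := mulr_gt0 t0 uu0.
    move: Px; rewrite hP => /(_ i); lra.
  have half h : dotv (u i) h = 0 -> 0 <= dotv (aQ j) h.
    move=> hh; pose tau := eta / (\sum_k `|h 0 k| + 1).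
    have S0 : 0 < \sum_k `|h 0 k| + 1 by rewrite ltr_wpDl // sumr_ge0.
    have tau0 : 0 < tau by rewrite divr_gt0.
    have : Q (wq + tau *: h).
      apply: nbhd; first by rewrite dotvZr hh mulr0.
      move=> k; rewrite mxE normrM gtr0_norm //.
      have hk := abs_le_sum h k.
      have : tau * (\sum_k `|h 0 k| + 1) = eta by rewrite /tau divfK ?gt_eqF.
      have : tau * `|h 0 k| <= tau * (\sum_k `|h 0 k| + 1) by rewrite ler_pM2l //; apply: le_trans hk _; rewrite lerDl.
      lra.
    rewrite hQ => /(_ j); rewrite dotvDr dotvZr hj lerDl.
    by rewrite pmulr_rge0.
  have perp h : dotv (u i) h = 0 -> dotv (aQ j) h = 0.
    move=> hh; apply/eqP; rewrite eq_le half // andbT.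
    have := half (- h); rewrite !dotvNr hh oppr0 oppr_ge0; exact.
  pose lam := dotv (aQ j) (u i) / dotv (u i) (u i).
  have hvec : aQ j = lam *: u i.
    apply/eqP; rewrite -subr_eq0; apply/eqP; apply: dotv_self_eq0.
    set hv := aQ j - lam *: u i.
    have hperp : dotv (u i) hv = 0.
      by rewrite /hv dotvBr dotvZr (dotvC (u i) (aQ j)) /lam divfK ?subrr // gt_eqF.
    have hp := perp hv hperp.
    by rewrite {1}/hv dotvBl dotvZl hperp mulr0 subr0.
  have hbQ : bQ j = lam * b i by rewrite -hj hvec dotvZl uw.
  have hform y : dotv (aQ j) y - bQ j = lam * (dotv (u i) y - b i).
    by rewrite hvec dotvZl hbQ mulrBr.
  have lam0 : 0 < lam.
    have : Q (x0 *m A) by apply: QP; rewrite hP => l; exact: ltW (hx0 l).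
    rewrite hQ => /(_ j); rewrite -subr_ge0 hform -hu // => h.
    have hxi : 0 < dotv (a i) x0 - b i by rewrite subr_gt0 hx0.
    rewrite lt_neqAle eq_sym; apply/andP; split; last by move: h; rewrite pmulr_lge0.
    apply/eqP => l0; have := primitive_nz (proj1 (hprQ j)).
    by rewrite hvec l0 scale0r eqxx.
  exists j, lam; split => //; split => //.
  apply: (prim_mult_le1 (uint i) lam0); rewrite -hvec; exact: (proj1 (hprQ j)).
have G9 i s y : I i -> 0 < s -> level_set aQ bQ s y -> s <= dotv (u i) y - b i.
  move=> hi s0' hy.
  have [j [lam [l0 [l1 hf]]]] := facetQ i hi.
  have Qy : Q y by rewrite hQ => j'; have := hy j'; lra.
  case: Qy => x Px hxy; rewrite -hxy in hy *.
  have hx : 0 <= dotv (u i) (x *m A) - b i.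
    by rewrite -hu // subr_ge0; move: Px; rewrite hP; apply.
  have := hy j; rewrite hf => hs.
  have := ler_piMl hx l1; lra.
pose SQ := [set s : R | 0 < s /\ level_set aQ bQ s !=set0].
have aQn0 j : aQ j != 0 by apply: primitive_nz; case: (hprQ j).
have hboxQ' : forall y : 'rV[R]_m, (forall j, `|y 0 j - y0 0 j| < eQ) -> ineq_set aQ bQ y.
  by move=> y /hboxQ; rewrite hQ.
have hy0 j : bQ j < dotv (aQ j) y0 by apply: (interior_strict eQ0 hboxQ' (aQn0 j)).
pose sq0 := \big[Num.min/1]_j (dotv (aQ j) y0 - bQ j).
have sq00 : 0 < sq0 by apply: mlt_bigmin => // j; rewrite subr_gt0.
have SQs0 : SQ sq0 by split => //; exists y0 => j; apply: mbigmin_le.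
have hBA y : dotv (a iI) (y *m B) = dotv (u iI) y.
  by rewrite hu // -mulmxA BA mulmx1.
have SQub s : SQ s -> s <= ss.
  move=> [s0' [y hy]]; rewrite leNgt; apply/negP => hlt.
  apply: (no_all_pos (y *m B - c)) => i hi.
  rewrite dotvBr (hu i hi (y *m B)) -mulmxA BA mulmx1.
  have := cI i hi; have := G9 i s y hi s0' hy; rewrite /f; lra.
have hsupQ : has_sup SQ by split; [exists sq0| exists ss].
pose sq := sup SQ.
have sq_le : sq <= ss by apply: ge_sup; [exists sq0 | exact: SQub].
have sq0' : 0 < sq by apply: lt_le_trans sq00 (sup_upper_bound hsupQ SQs0).
have hqQ : qcodeg aQ bQ = sq^-1 by [].
split.
  by rewrite hq hqQ lef_pV2 ?posrE.
move=> heq.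
have sqss : sq = ss by apply: invr_inj; rewrite -hq -hqQ.
have hcoreQ : core aQ bQ = level_set aQ bQ ss by rewrite /core hqQ invrK sqss.
have bndQ : exists M, forall x, ineq_set aQ bQ x -> forall j, `|x 0 j| <= M.
  by exists MQ => x; rewrite -hQ; exact: hMQ.
have neQ : ineq_set aQ bQ !=set0 by exists y0; apply: hboxQ' => j; rewrite subrr normr0.
have [cQ [QcQ hcQ]] := attain bndQ neQ.
have cQl : level_set aQ bQ ss cQ.
  move=> j; rewrite -sqss; apply: ge_sup; first by exists sq0.
  move=> s [s0' [y hy]].
  have Qy : ineq_set aQ bQ y by move=> j'; have := hy j'; lra.
  exact: (hcQ y s Qy hy j).
have uniq y : level_set aQ bQ ss y -> y = c *m A.
  move=> hy.
  have hge i : I i -> 0 <= dotv (a i) (y *m B - c).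
    move=> hi; rewrite dotvBr (hu i hi (y *m B)) -mulmxA BA mulmx1.
    have := cI i hi; have := G9 i ss y hi ss0 hy; rewrite /f; lra.
  have [eps [eps0 heps]] := pert_core _ hge.
  have hz i : I i -> dotv (a i) (y *m B - c) = 0.
    move=> hi; have := IP i hi _ heps; rewrite fadd cI // => h.
    have : eps * dotv (a i) (y *m B - c) = 0 by lra.
    by move/eqP; rewrite mulf_eq0 (gt_eqF eps0) /= => /eqP.
  have := kerI _ hz; rewrite mulmxBl -mulmxA BA mulmx1 => /eqP; rewrite subr_eq0 => /eqP.
  exact.
exists (c *m A); split.
  rewrite hcoreQ; apply/seteqP; split => y /=; first by move/uniq.
  by move=> ->; rewrite -(uniq cQ cQl).
apply/seteqP; split => y /=.
  move=> [x hx <-].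
  have : direction_space (core a b) (x - c).
    exists 1%N, (fun=> 1), (fun=> x), (fun=> c); split.
      by move=> _; split; [exact: hx | rewrite hcore; exact: cl].
    by rewrite big_ord1 scale1r.
  by move/hK; rewrite mulmxBl => /eqP; rewrite subr_eq0 => /eqP.
by move=> ->; exists c => //; rewrite hcore.
Qed.

End Part2.

Lemma qcodeg_ge0 (R : realType) k N (a : 'I_N -> 'rV[R]_k) (b : 'I_N -> R) : 0 <= qcodeg a b.
Proof.
rewrite /qcodeg invr_ge0.
set S := [set s | _].
case: (pselect (has_sup S)) => [hs|hns]; last by rewrite sup_out.
case: (hs) => [[s hsS] _]; apply: le_trans (sup_upper_bound hs hsS).
by case: hsS => /ltW.
Qed.

Unset Implicit Arguments.
Set Strict Implicit.

Theorem proposition2p3 (R : realType) (n : nat) (P : set 'rV[R]_n)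
  (N : nat) (a : 'I_N -> 'rV[R]_n) (b : 'I_N -> R) :
  rat_polytope_desc P a b ->
  forall (m : nat) (A : 'M[R]_(n, m)),
    (forall x : 'rV[R]_n, x *m A = 0 <-> direction_space (core a b) x) ->
    (forall i j, A i j \is a Num.int) ->
    (forall z : 'rV[R]_m, integral_vec z ->
       exists y : 'rV[R]_n, integral_vec y /\ y *m A = z) ->
  let Q := (fun x => x *m A) @` P in
  (exists (NQ : nat) (aQ : 'I_NQ -> 'rV[R]_m) (bQ : 'I_NQ -> R),
      rat_polytope_desc Q aQ bQ) /\
  (forall (NQ : nat) (aQ : 'I_NQ -> 'rV[R]_m) (bQ : 'I_NQ -> R),
      rat_polytope_desc Q aQ bQ ->
      qcodeg a b <= qcodeg aQ bQ /\
      (qcodeg aQ bQ = qcodeg a b ->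
         exists c : 'rV[R]_m,
           core aQ bQ = [set c] /\ (fun x => x *m A) @` core a b = [set c])).

Proof.
move=> hdesc m A hK hint hsurj Q.
split; first exact: (part1 hdesc hint hsurj).
case: (posnP N) => [N0|Npos]; last exact: (part2 hdesc hK hint hsurj Npos).
subst N.
move=> NQ aQ bQ hQd.
have hq0 : qcodeg a b = 0 by apply: qcodeg_N0.
rewrite hq0; split; first exact: qcodeg_ge0.
move=> hQ0.
case: hdesc => hP [[MP hMP] [x0 [e [e0 hbox]]] _ _ _].
have hPall x : P x by rewrite hP => -[].
have n0 : n = 0%N.
  case: (posnP n) => [//|npos]; exfalso.
  have := hMP (const_mx (`|MP| + 1)) (hPall _) (Ordinal npos).
  rewrite mxE; have := ler_norm MP; have : 0 <= `|MP| by [].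
  move=> h1 h2; rewrite ger0_norm; [lra | lra].
subst n.
have xA0 (x : 'rV[R]_0) : x *m A = 0 by rewrite thinmx0 mul0mx.
exists 0; split.
  rewrite /core hQ0 invr0; case: hQd => hQ _.
  apply/seteqP; split => y /=.
    move=> hy; have : Q y by rewrite hQ => j; have := hy j; lra.
    by case=> x _ <-; rewrite xA0.
  move=> ->; move=> j.
  have : Q 0 by exists x0 => //; rewrite xA0.
  by rewrite hQ => /(_ j); lra.
apply/seteqP; split => y /=.
  by case=> x _ <-; rewrite xA0.
move=> ->; exists 0; last by rewrite xA0.
by rewrite /core hq0 invr0 => -[].
Qed.
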